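(* Let $t\le k$ and $n$ be positive integers. If there exists an orthogonal array OA$(t,k,n)$, then there exists a large set of orthogonal arrays LOA$(t,k,n)$.
   Context: An orthogonal array OA$(t,k,n)$ is an $n^t\times k$ matrix with entries from $\mathbb{Z}_n$ such that in the submatrix formed by any $t$ columns each ordered $t$-tuple over $\mathbb{Z}_n$ occurs exactly once as a row. A large set of orthogonal arrays LOA$(t,k,n)$ is a set of $n^{k-t}$ orthogonal arrays OA$(t,k,n)$ such that each vector of length $k$ over $\mathbb{Z}_n$ occurs as a row in exactly one of them. *)

(* Defs.v *)
From mathcomp Require Import all_boot.
Set Implicit Arguments. Unset Strict Implicit. Unset Printing Implicit Defensive.

(* Entries are taken from 'I_n, identified with Z_n = {0,...,n-1}
   (only the symbol set matters; no ring structure is used). *)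

Definition array (t k n : nat) := 'I_(n ^ t) -> {ffun 'I_k -> 'I_n}.

(* Orthogonal array OA(t,k,n): for every choice of t distinct columns
   (given as an injective map c : 'I_t -> 'I_k), every ordered t-tuple
   u over Z_n occurs exactly once as a row of the corresponding submatrix. *)
Definition is_OA (t k n : nat) (A : array t k n) : Prop :=
  forall c : 'I_t -> 'I_k, injective c ->
  forall u : {ffun 'I_t -> 'I_n},
    #|[set r : 'I_(n ^ t) | [ffun j => A r (c j)] == u]| = 1.

Definition is_LOA (t k n : nat) (L : 'I_(n ^ (k - t)) -> array t k n) : Prop :=
  (forall i, is_OA (L i)) /\
  forall v : {ffun 'I_k -> 'I_n},
    #|[set i : 'I_(n ^ (k - t)) | [exists r : 'I_(n ^ t), L i r == v]]| = 1.

(* Main.v *)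
Require Import Defs.
From mathcomp Require Import all_boot all_algebra.
Set Implicit Arguments. Unset Strict Implicit. Unset Printing Implicit Defensive.
Import GRing.Theory.
Local Open Scope ring_scope.

Section Main.
Variables (t d m : nat).
Local Notation n := m.+1.
Local Notation k := (t + d)%N.
Variable A : array t k n.
Hypothesis HA : is_OA A.

Definition ext (w : {ffun 'I_d -> 'I_n}) : {ffun 'I_k -> 'I_n} :=
  [ffun j => match split j with inl _ => 0 | inr j' => w j' end].

Lemma cardF : (n ^ (k - t) = #|{ffun 'I_d -> 'I_n}|)%N.
Proof. by rewrite card_ffun !card_ord addKn. Qed.

Definition ofi (i : 'I_(n ^ (k - t))) := enum_val (cast_ord cardF i).
Definition toi (w : {ffun 'I_d -> 'I_n}) : 'I_(n ^ (k - t)) :=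
  cast_ord (esym cardF) (enum_rank w).
Lemma toiK : cancel toi ofi.
Proof. by move=> w; rewrite /ofi /toi cast_ordKV enum_rankK. Qed.
Lemma ofiK : cancel ofi toi.
Proof. by move=> i; rewrite /ofi /toi enum_valK cast_ordK. Qed.

Definition LL (i : 'I_(n ^ (k - t))) : array t k n :=
  fun r => [ffun j => A r j + ext (ofi i) j].

Lemma OA_uniq (c : 'I_t -> 'I_k) (r1 r2 : 'I_(n ^ t)) : injective c ->
  (forall j, A r1 (c j) = A r2 (c j)) -> r1 = r2.
Proof.
move=> ci E.
have := HA ci [ffun j => A r1 (c j)].
move/eqP/cards1P=> [r0 Hr0].
have h1 : r1 \in [set r | [ffun j => A r (c j)] == [ffun j => A r1 (c j)]].
  by rewrite inE.
have h2 : r2 \in [set r | [ffun j => A r (c j)] == [ffun j => A r1 (c j)]].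
  by rewrite inE; apply/eqP/ffunP=> j; rewrite !ffunE E.
by move: h1 h2; rewrite Hr0 !inE => /eqP -> /eqP ->.
Qed.

Lemma LL_OA i : is_OA (LL i).
Proof.
move=> c ci u.
have := HA ci [ffun j => u j - ext (ofi i) (c j)].
move=> <-; apply: eq_card => r; rewrite !inE.
apply/eqP/eqP => /ffunP E; apply/ffunP => j; move: (E j); rewrite !ffunE.
  by move=> <-; rewrite addrK.
by move=> ->; rewrite subrK.
Qed.

Lemma LL_part v :
  #|[set i : 'I_(n ^ (k - t)) | [exists r : 'I_(n ^ t), LL i r == v]]| = 1%N.
Proof.
have li : injective (@lshift t d) by apply: lshift_inj.
have := HA li [ffun j => v (lshift d j)].
move/eqP/cards1P=> [r0 Hr0].
have Er0 : forall j, A r0 (lshift d j) = v (lshift d j).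
  have : r0 \in [set r | [ffun j => A r (lshift d j)] == [ffun j => v (lshift d j)]].
    by rewrite Hr0 set11.
  by rewrite inE => /eqP /ffunP E j; move: (E j); rewrite !ffunE.
set w := [ffun j' => v (rshift t j') - A r0 (rshift t j')].
apply/eqP/cards1P; exists (toi w); apply/setP => i; rewrite !inE.
apply/existsP/eqP.
  move=> [r /eqP Hr].
  have Hl : forall j, A r (lshift d j) = v (lshift d j).
    move=> j; rewrite -Hr /LL ffunE /ext ffunE.
    by case: splitP => [j' /= /val_inj -> | j' /= Hj]; [rewrite addr0 | move: (ltn_ord j); rewrite Hj ltnNge leq_addr].
  have rr : r = r0 by apply: (OA_uniq li) => j; rewrite Hl Er0.
  subst r.
  rewrite -[i]ofiK; congr toi; apply/ffunP => j'.
  have := congr1 (fun f : {ffun _ -> _} => f (rshift t j')) Hr; rewrite /= /LL ffunE /ext ffunE.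
  case: splitP => [j'' /= Hj | j'' /= /eqP]; first by move: (ltn_ord j''); rewrite -Hj ltnNge leq_addr.
  rewrite eqn_add2l => /eqP/val_inj Ej E; subst j''.
  by rewrite ffunE -E addrAC subrr add0r.
move=> ->; exists r0; apply/eqP/ffunP => j; rewrite /LL toiK !ffunE.
case: splitP => [j' Hj | j' Hj].
  have -> : j = lshift d j' by apply: val_inj.
  by rewrite addr0 Er0.
have -> : j = rshift t j' by apply: val_inj.
by rewrite ffunE addrC subrK.
Qed.

End Main.
Local Close Scope ring_scope.

Theorem theorem3 (t k n : nat) :
  0 < t -> t <= k -> 0 < n ->
  (exists A : array t k n, is_OA A) ->
  exists L : 'I_(n ^ (k - t)) -> array t k n, is_LOA L.
Proof.
move=> _ /subnKC <-; case: n => [//|m] _ [A HA].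
exists (LL A); split; first exact: LL_OA.
exact: LL_part.
Qed.
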